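(* Consider running GD-$k$ with rate $r=\frac{1}{\gamma k^2}$ on an instance $\sigma$ of $k$-MPMD on an $H$-metric space with parameter $\gamma$, and let $\mathcal M=\{M_1,\ldots,M_p\}$ be the output perfect $k$-way matching, where $M_\ell=\{v_{\ell,1},\ldots,v_{\ell,k}\}$ is matched at time $\tau_\ell$. Let $T$ be the time at which all requests are matched. Then the total waiting cost satisfies $$\sum_{\ell=1}^p\sum_{i=1}^k(\tau_\ell-\mathrm{atime}(v_{\ell,i}))=\frac1r\sum_{S\subseteq V}\mathrm{sur}(S)\,y_S(T)\le\frac1r\,\mathcal D'(\sigma),$$ where $\mathcal D'(\sigma)$ is the optimal value of $(\mathcal D')$.
   Context: $k\ge2$. An $H$-metric with parameter $\gamma$ (integer, $1\le\gamma\le k-1$) is a map $d_H:\chi^k\to[0,\infty)$ that is invariant under permutation of its arguments, is zero iff all arguments are equal, satisfies $d_H(p_1,\ldots,p_k)\le d_H(p_1,\ldots,p_i,a,\ldots,a)+d_H(a,\ldots,a,p_{i+1},\ldots,p_k)$ for all $p_j,a\in\chi$ and $i\in\{1,\dots,k\}$ (with $k-i$, resp. $i$, copies of $a$), and satisfies: $d_H(p)\le d_H(p')$ whenever the set of distinct entries of $p$ is a proper subset of that of $p'$, and $d_H(p)\le\gamma d_H(p')$ whenever these sets are equal. An instance is $\sigma=(V,\mathrm{atime},\mathrm{pos})$ with $V=\{u_1,\ldots,u_m\}$ ($m$ a multiple of $k$), nondecreasing arrival times $\mathrm{atime}:V\to\mathbb R_{\ge0}$ and positions $\mathrm{pos}:V\to\chi$.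 The metric $d$ on $\chi$ is $d(p,q):=d_H(p,q,\ldots,q)+d_H(q,p,\ldots,p)$ (first argument once, second $k-1$ times); $E$ is the set of unordered pairs of distinct requests, $\mathrm{opt\text{-}cost}(\{u,w\}):=d(\mathrm{pos}(u),\mathrm{pos}(w))+|\mathrm{atime}(u)-\mathrm{atime}(w)|$; for $S\subseteq V$, $\mathrm{sur}(S):=|S|\bmod k$ and $\delta(S)$ is the set of pairs with exactly one element in $S$. The LP $(\mathcal D')$ is: maximize $\sum_{S\subseteq V}\mathrm{sur}(S)(k-\mathrm{sur}(S))y_S$ subject to $\sum_{S:e\in\delta(S)}y_S\le\frac{1}{\gamma k^2}\mathrm{opt\text{-}cost}(e)$ for all $e\in E$ and $y_S\ge0$ for all $S\subseteq V$. Algorithm GD-$k$ (Greedy Dual for $k$-MPMD) runs in continuous time from $0$. It maintains: a partition of the already-arrived requests into ''active sets'' ($A(v)$ denotes the active set containing $v$); a family $\mathcal M$ of disjoint $k$-element sets of requests (the groups matched so far); a request is free if it lies in no set of $\mathcal M$, and $\mathrm{free}(S)$ is the set of free requests of $S$; and dual values $y_S(\tau)\ge0$ for $S\subseteq V$, all initially $0$. When a request $v$ arrives, $A(v):=\{v\}$ is created. At every moment, for each active set $S$ with $\mathrm{free}(S)\ne\emptyset$, $y_S$ increases continuously at rate $r$; all other $y_S$ stay constant. Whenever a pair $e=\{u,w\}$ of arrived requests with $A(u)\ne A(w)$ becomes tight, i.e. $\sum_{S:e\in\delta(S)}y_S=\frac{1}{\gamma k^2}\mathrm{opt\text{-}cost}(e)$,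 the algorithm replaces $A(u)$ and $A(w)$ by the single active set $S=A(u)\cup A(w)$, marks $e$, and, while $|\mathrm{free}(S)|\ge k$, chooses arbitrarily $k$ free requests of $S$ and adds them as a group to $\mathcal M$ (they are matched at the current time). *)

(* Defs.v *)
From HB Require Import structures.
From mathcomp Require Import all_boot all_order all_algebra all_fingroup.
From mathcomp Require Import boolp classical_sets reals constructive_ereal ereal.
Set Implicit Arguments. Unset Strict Implicit. Unset Printing Implicit Defensive.
Import Order.TTheory GRing.Theory Num.Theory.
Local Open Scope ring_scope.
Local Open Scope classical_set_scope.

Section HMetric.
Variables (R : realType) (X : Type) (k gamma : nat).

Definition entries (p : 'I_k -> X) (x : X) : Prop := exists j, p j = x.

Definition is_Hmetric (dH : ('I_k -> X) -> R) : Prop :=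
  (forall (s : {perm 'I_k}) (p : 'I_k -> X), dH (fun j => p (s j)) = dH p) /\
  (forall p, 0 <= dH p) /\
  (forall p, dH p = 0 <-> (forall i j, p i = p j)) /\
  (forall (p : 'I_k -> X) (a : X) (i : nat), (1 <= i <= k)%N ->
     dH p <= dH (fun j : 'I_k => if (j < i)%N then p j else a)
             + dH (fun j : 'I_k => if (j < i)%N then a else p j)) /\
  (forall p p', (forall x, entries p x -> entries p' x) ->
                (exists x, entries p' x /\ ~ entries p x) -> dH p <= dH p') /\
  (forall p p', (forall x, entries p x <-> entries p' x) ->
                dH p <= gamma%:R * dH p').

Definition hdist (dH : ('I_k -> X) -> R) (p q : X) : R :=
  dH (fun j : 'I_k => if val j == 0%N then p else q)
  + dH (fun j : 'I_k => if val j == 0%N then q else p).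
End HMetric.

Section Instance.
Variables (R : realType) (X : Type) (k m gamma : nat).
Variables (dH : ('I_k -> X) -> R) (atime : 'I_m -> R) (pos : 'I_m -> X).

Definition opt_cost (u w : 'I_m) : R :=
  hdist dH (pos u) (pos w) + `|atime u - atime w|.

Definition sur (S : {set 'I_m}) : nat := (#|S| %% k)%N.

Definition cuts (S : {set 'I_m}) (u w : 'I_m) : bool := (u \in S) != (w \in S).

Definition cutsum (y : {set 'I_m} -> R) (u w : 'I_m) : R :=
  \sum_(S : {set 'I_m} | cuts S u w) y S.

Definition lp_bound (u w : 'I_m) : R :=
  (gamma%:R * k%:R ^+ 2)^-1 * opt_cost u w.

Definition Dfeasible (y : {set 'I_m} -> R) : Prop :=
  (forall u w : 'I_m, u != w -> cutsum y u w <= lp_bound u w) /\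
  (forall S, 0 <= y S).

Definition Dobj (y : {set 'I_m} -> R) : R :=
  \sum_(S : {set 'I_m}) ((sur S * (k - sur S))%N%:R * y S).

Definition Dprime : \bar R :=
  ereal_sup [set (Dobj y)%:E | y in [set y | Dfeasible y]].
End Instance.

Local Close Scope classical_set_scope.
Record gstate (R : realType) (m : nat) := GState {
  gtime : R;
  gact  : {set {set 'I_m}};
  gM    : seq ({set 'I_m} * R);          (* matched groups with match times *)
  gy    : {set 'I_m} -> R
}.

Section GD.
Variables (R : realType) (X : Type) (k m gamma : nat) (r : R).
Variables (dH : ('I_k -> X) -> R) (atime : 'I_m -> R) (pos : 'I_m -> X).

Definition matched (st : gstate R m) (v : 'I_m) : bool :=
  has (fun g : {set 'I_m} * R => v \in (g.1 : {set 'I_m})) (gM st).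
Definition arrived (st : gstate R m) (v : 'I_m) : bool := v \in finset.cover (gact st).
Definition free (st : gstate R m) (S : {set 'I_m}) : {set 'I_m} :=
  [set v in S | ~~ matched st v].
Definition blk (st : gstate R m) (v : 'I_m) : {set 'I_m} := finset.pblock (gact st) v.

Definition bnd := @lp_bound R X k m gamma dH atime pos.

Definition grow (st : gstate R m) (t' : R) : {set 'I_m} -> R :=
  fun S => gy st S +
    (if (S \in gact st) && (free st S != finset.set0) then r * (t' - gtime st) else 0).

Definition cross_pair (st : gstate R m) (u w : 'I_m) : bool :=
  [&& arrived st u, arrived st w & blk st u != blk st w].

Inductive gd_step : gstate R m -> gstate R m -> Prop :=
| gd_arrive st v :
    ~~ arrived st v -> atime v = gtime st ->
    gd_step st (GState (gtime st) (gact st :|: [set [set v]]) (gM st) (gy st))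
| gd_merge st u w (gs : seq {set 'I_m}) :
    cross_pair st u w ->
    cutsum (gy st) u w = bnd u w ->
    (* the "while |free(S)| >= k" loop: disjoint k-subsets of free(S)
       are matched, leaving fewer than k free requests in S *)
    all (fun g : {set 'I_m} => (g \subset free st (blk st u :|: blk st w)) && (#|g| == k)) gs ->
    pairwise (fun g h : {set 'I_m} => [disjoint g & h]) gs ->
    (#|free st (blk st u :|: blk st w) :\: \bigcup_(g <- gs) g| < k)%N ->
    gd_step st (GState (gtime st)
                  ((gact st :\ blk st u :\ blk st w) :|: [set blk st u :|: blk st w])
                  (gM st ++ [seq (g, gtime st) | g <- gs])
                  (gy st))
| gd_wait st (t' : R) :
    gtime st < t' ->
    (forall v, atime v <= gtime st -> arrived st v) ->
    (forall v, ~~ arrived st v -> t' <= atime v) ->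
    (* every pair that became tight has been processed *)
    (forall u w, cross_pair st u w -> cutsum (gy st) u w < bnd u w) ->
    (forall u w, cross_pair st u w -> cutsum (grow st t') u w <= bnd u w) ->
    gd_step st (GState t' (gact st) (gM st) (grow st t')).

Definition gd_init : gstate R m := GState 0 finset.set0 [::] (fun _ => 0).

Inductive gd_reach : gstate R m -> Prop :=
| gd_reach0 : gd_reach gd_init
| gd_reachS st st' : gd_reach st -> gd_step st st' -> gd_reach st'.
End GD.

(* Main.v *)
Require Import Defs.
From HB Require Import structures.
From mathcomp Require Import all_boot all_order all_algebra all_fingroup.
From mathcomp Require Import boolp classical_sets reals constructive_ereal ereal.
From mathcomp Require Import ring lra.
Import Order.TTheory GRing.Theory Num.Theory.
Local Open Scope ring_scope.

Lemma big_bigcup_seq (T : finType) (Q : Type) (idx : Q) (op : Monoid.com_law idx)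
  (F : T -> Q) (gs : seq {set T}) :
  pairwise (fun g h : {set T} => [disjoint g & h]) gs ->
  \big[op/idx]_(g <- gs) \big[op/idx]_(v in g) F v =
  \big[op/idx]_(v in \bigcup_(g <- gs) g) F v.
Proof.
elim: gs => [|g gs IH]; first by rewrite !big_nil big_set0.
rewrite /= => /andP[hall hp]; rewrite !big_cons IH //.
have hd : [disjoint g & \bigcup_(h <- gs) h].
  rewrite -setI_eq0; apply/eqP/setP => x; rewrite !inE finset.bigcup_seq.
  apply/negbTE/negP => /andP[xg /finset.bigcupP[h hin xh]].
  move/allP: hall => /(_ h hin) /disjointFr /(_ xg); by rewrite xh.
rewrite -bigU //=; apply: eq_bigl => x; by rewrite !inE.
Qed.

Lemma card_bigcup_seq (T : finType) (k : nat) (gs : seq {set T}) :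
  pairwise (fun g h : {set T} => [disjoint g & h]) gs ->
  all (fun g : {set T} => #|g| == k) gs ->
  #|\bigcup_(g <- gs) g| = (k * size gs)%N.
Proof.
move=> hp ha; rewrite -sum1_card -(@big_bigcup_seq T nat 0%N addn (fun _ => 1%N) gs hp).
rewrite (eq_big_seq (fun _ => k)); last first.
  by move=> g /(allP ha) /eqP <-; rewrite sum1_card.
by rewrite big_const_seq count_predT iter_addn_0 mulnC.
Qed.

Lemma in_cover (T : finType) (P : {set {set T}}) x :
  reflect (exists2 B, B \in P & x \in B) (x \in finset.cover P).
Proof. by apply: (iffP finset.bigcupP) => [[B] | [B]]; exists B. Qed.

Lemma disjointU3 (T : finType) (A B C : {set T}) :
  [disjoint A :|: B & C] = [disjoint A & C] && [disjoint B & C].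
Proof. by rewrite -!setI_eq0 finset.setIUl finset.setU_eq0. Qed.

Lemma disjoint_set1 (T : finType) (v : T) (C : {set T}) :
  [disjoint [set v] & C] = (v \notin C).
Proof.
rewrite -setI_eq0; apply/eqP/idP => [h | h].
  apply/negP => vC; have : v \in [set v] :&: C by rewrite !inE eqxx vC.
  by rewrite h inE.
apply/setP => x; rewrite !inE; apply/negbTE/negP => /andP[/eqP -> ]; exact/negP.
Qed.

Notation gfree := Defs.free.
Notation pact := Defs.gact.

Section Main.
Variables (R : realType) (X : Type) (k m gamma : nat) (r : R).
Variables (dH : ('I_k -> X) -> R) (atime : 'I_m -> R) (pos : 'I_m -> X).
Hypothesis hk : (2 <= k)%N.
Hypothesis hg : (1 <= gamma)%N.
Hypothesis hdH : forall p, 0 <= dH p.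
Hypothesis hr : r = (gamma%:R * k%:R ^+ 2)^-1.
Hypothesis hat0 : forall v, 0 <= atime v.

Local Notation B := (@bnd R X k m gamma dH atime pos).

Lemma r_gt0 : 0 < r.
Proof.
rewrite hr invr_gt0 mulr_gt0 // ?ltr0n // exprn_gt0 // ltr0n.
by apply: leq_trans hk.
Qed.

Lemma B_ge u w : r * (atime u - atime w) <= B u w.
Proof.
rewrite /bnd /lp_bound -hr /opt_cost; apply: ler_wpM2l; first exact: ltW r_gt0.
apply: le_trans (ler_norm _) _; rewrite lerDr /hdist addr_ge0 //.
Qed.

Lemma B_ge0 u w : 0 <= B u w.
Proof.
rewrite /bnd /lp_bound -hr /opt_cost; apply: mulr_ge0; first exact: ltW r_gt0.
by rewrite /hdist !addr_ge0.
Qed.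

Lemma B_sym u w : B u w = B w u.
Proof. by rewrite /bnd /lp_bound /opt_cost /hdist distrC (addrC (dH _)). Qed.

Lemma cutsum_sym (y : {set 'I_m} -> R) u w : cutsum y u w = cutsum y w u.
Proof. by apply: eq_bigl => S; rewrite /cuts eq_sym. Qed.

Lemma cut_unarr (y : {set 'I_m} -> R) (arr : pred 'I_m) (t : R) (u w : 'I_m) :
  (forall S, 0 <= y S) -> (forall v, ~~ arr v -> forall S : {set 'I_m}, v \in S -> y S = 0) ->
  (forall v, arr v -> \sum_(S : {set 'I_m} | v \in S) y S <= r * (t - atime v)) ->
  t <= atime u -> ~~ arr u -> cutsum y u w <= B u w.
Proof.
move=> y0 yun yarr tu uu.
have -> : cutsum y u w = \sum_(S : {set 'I_m} | w \in S) y S.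
  rewrite /cutsum [RHS]big_mkcond [LHS]big_mkcond /=; apply: eq_bigr => S _.
  rewrite /cuts; case uS: (u \in S); case wS: (w \in S) => //=;
  by rewrite (yun u uu S uS).
case aw: (arr w).
  apply: le_trans (yarr w aw) _; apply: le_trans (B_ge u w).
  by apply: ler_wpM2l; [exact: ltW r_gt0 | rewrite lerD2r].
by rewrite big1 ?B_ge0 // => S wS; apply: (yun w); rewrite ?aw.
Qed.


Definition W (st : gstate R m) : R :=
  \sum_(g <- gM st) \sum_(v in g.1) (g.2 - atime v)
  + \sum_(v | arrived st v && ~~ matched st v) (gtime st - atime v).

Definition RHS (st : gstate R m) : R :=
  r^-1 * \sum_(S : {set 'I_m}) ((sur k S)%:R * gy st S).

Record inv (st : gstate R m) : Prop := Inv {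
  i_triv : finset.trivIset (pact st);
  i_match : forall v, matched st v -> arrived st v;
  i_free : forall S, S \in pact st -> #|gfree st S| = sur k S;
  i_pos : forall S, 0 <= gy st S;
  i_una : forall v, ~~ arrived st v -> forall S : {set 'I_m}, v \in S -> gy st S = 0;
  i_arr : forall v, arrived st v ->
     \sum_(S : {set 'I_m} | v \in S) gy st S <= r * (gtime st - atime v);
  i_time : forall v, ~~ arrived st v -> gtime st <= atime v;
  i_cut : forall u w, u != w -> cutsum (gy st) u w <= B u w;
  i_W : W st = RHS st }.

Lemma inv_init : inv (gd_init R m).
Proof.
have narr : forall v, arrived (gd_init R m) v = false.
  by move=> v; apply/negbTE/negP => /in_cover [C]; rewrite finset.inE.
split => /=.
- by apply/finset.trivIsetP => C D; rewrite finset.inE.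
- by [].
- by move=> S; rewrite finset.inE.
- by [].
- by [].
- by move=> v; rewrite narr.
- by move=> v _; apply: hat0.
- move=> u w _; rewrite /cutsum big1 ?B_ge0 //.
- rewrite /W /RHS /= big_nil add0r big1; last by move=> v; rewrite narr.
  by rewrite big1 ?mulr0 // => S _; rewrite mulr0.
Qed.

Lemma sum_free (st : gstate R m) (c : R) :
  finset.trivIset (pact st) ->
  \sum_(v | arrived st v && ~~ matched st v) c =
  \sum_(S in pact st) (#|gfree st S|)%:R * c.
Proof.
move=> htr; rewrite /arrived (@big_trivIset_cond _ _ _ _ _ _ (fun=> c) htr).
apply: eq_bigr => S _.
rewrite (eq_bigl (fun x => x \in gfree st S)); last by move=> x; rewrite /gfree finset.inE.
by rewrite sumr_const mulr_natl.
Qed.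

Lemma inv_wait (st : gstate R m) t' : inv st -> gtime st < t' ->
  (forall v, ~~ arrived st v -> t' <= atime v) ->
  (forall u w, cross_pair st u w -> cutsum (grow r st t') u w <= B u w) ->
  inv (GState t' (pact st) (gM st) (grow r st t')).
Proof.
move=> [htr hma hfr hpo hun har hti hcu hW] hlt htime hcp.
set d := t' - gtime st.
have hd : 0 <= d by rewrite /d subr_ge0 ltW.
have r0 := ltW r_gt0.
have gE S : grow r st t' S = gy st S +
   (if (S \in pact st) && (gfree st S != finset.set0) then r * d else 0) by [].
have pos' S : 0 <= grow r st t' S.
  by rewrite gE addr_ge0 //; case: ifP => // _; apply: mulr_ge0.
have una' v : ~~ arrived st v -> forall S : {set 'I_m}, v \in S -> grow r st t' S = 0.
  move=> nv S vS; rewrite gE (hun v nv S vS) add0r; case: ifP => // /andP[SP _].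
  by case/negP: nv; apply/in_cover; exists S.
have arr' v : arrived st v ->
    \sum_(S : {set 'I_m} | v \in S) grow r st t' S <= r * (t' - atime v).
  move=> av; rewrite big_split /=.
  have : \sum_(S : {set 'I_m} | v \in S)
      (if (S \in pact st) && (gfree st S != finset.set0) then r * d else 0) <= r * d.
    rewrite (bigD1 (blk st v)) /=; last by rewrite mem_pblock.
    rewrite big1 ?addr0; first by case: ifP => // _; apply: mulr_ge0.
    move=> S /andP[vS neq]; case: ifP => // /andP[SP _].
    by rewrite -(def_pblock htr SP vS) eqxx in neq.
  have := har v av; rewrite /d; lra.
have cut' u w : u != w -> cutsum (grow r st t') u w <= B u w.
  move=> uw; case cp: (cross_pair st u w); first exact: hcp.
  case au: (arrived st u); last first.
    by apply: (@cut_unarr _ (arrived st) t' u w pos' una' arr'); [apply: htime|]; rewrite au.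
  case aw: (arrived st w); last first.
    rewrite cutsum_sym B_sym.
    by apply: (@cut_unarr _ (arrived st) t' w u pos' una' arr'); [apply: htime|]; rewrite aw.
  have eb : blk st u = blk st w.
    by apply/eqP; move: cp; rewrite /cross_pair au aw /= => /negbFE.
  have -> : cutsum (grow r st t') u w = cutsum (gy st) u w.
    apply: eq_bigr => S cS; rewrite gE; case: ifP => [/andP[SP _]|_]; last by rewrite addr0.
    exfalso; move: cS; rewrite /cuts.
    case uS: (u \in S); case wS: (w \in S) => //= _.
      have e : blk st w = S by rewrite -eb; exact: def_pblock htr SP uS.
      by move: (mem_pblock (pact st) w); rewrite -/(blk st w) e wS -/(arrived st w) aw.
    have e : blk st u = S by rewrite eb; exact: def_pblock htr SP wS.
    by move: (mem_pblock (pact st) u); rewrite -/(blk st u) e uS -/(arrived st u) au.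
  exact: hcu.
split => //.
rewrite /W /RHS /=.
change (\sum_(g <- gM st) \sum_(v in g.1) (g.2 - atime v) +
  \sum_(v | arrived st v && ~~ matched st v) (t' - atime v) =
  r^-1 * \sum_S (sur k S)%:R * grow r st t' S).
have e1 : \sum_(v | arrived st v && ~~ matched st v) (t' - atime v) =
    \sum_(v | arrived st v && ~~ matched st v) (gtime st - atime v)
    + \sum_(S in pact st) (#|gfree st S|)%:R * d.
  rewrite -sum_free // -big_split /=; apply: eq_bigr => v _; rewrite /d; ring.
have e2 : \sum_S (sur k S)%:R * grow r st t' S =
    \sum_S (sur k S)%:R * gy st S + r * \sum_(S in pact st) (#|gfree st S|)%:R * d.
  rewrite [X in _ + r * X]big_mkcond mulr_sumr -big_split /=; apply: eq_bigr => S _.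
  rewrite gE mulrDr; congr (_ + _).
  case SP: (S \in pact st) => /=; last by rewrite !mulr0.
  rewrite -(hfr S SP).
  case: ifP => [_|/negbFE/eqP ->]; first by ring.
  by rewrite cards0 !mul0r mulr0.
rewrite e1 e2 mulrDr mulKf; last exact: (negbT (gt_eqF r_gt0)).
rewrite addrA; congr (_ + _); exact: hW.
Qed.

Lemma inv_arrive (st : gstate R m) v : inv st -> ~~ arrived st v ->
  atime v = gtime st ->
  inv (GState (gtime st) (pact st :|: [set [set v]]) (gM st) (gy st)).
Proof.
move=> [htr hma hfr hpo hun har hti hcu hW] nv hv.
set st' := GState _ _ _ _.
have nmv : ~~ matched st v by apply/negP => /hma; apply/negP.
have arrE x : arrived st' x = arrived st x || (x == v).
  apply/in_cover/orP => [[C] | [/in_cover [C CP xC] | /eqP ->]].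
  - rewrite !finset.inE => /orP [CP xC | /eqP -> ].
      by left; apply/in_cover; exists C.
    by move=> /set1P ->; right.
  - by exists C; rewrite // finset.inE CP.
  - by exists [set v]; rewrite !finset.inE eqxx ?orbT.
have vC C : C \in pact st -> v \notin C.
  by move=> CP; apply/negP => vC; case/negP: nv; apply/in_cover; exists C.
split.
- apply/finset.trivIsetP => C D; rewrite !finset.inE.
  move=> /orP[CP|/eqP->] /orP[DP|/eqP->] neq.
  + exact: (finset.trivIsetP htr).
  + by rewrite disjoint_sym disjoint_set1 vC.
  + by rewrite disjoint_set1 vC.
  + by rewrite eqxx in neq.
- by move=> x /hma ax; rewrite arrE ax.
- move=> S; rewrite !finset.inE => /orP[SP|/eqP->]; first exact: hfr.
  have -> : gfree st' [set v] = [set v].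
    apply/setP => x; rewrite /gfree !finset.inE.
    by case: (x =P v) => [->|] //=; rewrite nmv.
  by rewrite /sur cards1 modn_small.
- exact: hpo.
- by move=> x; rewrite arrE negb_or => /andP[nx _]; apply: hun.
- move=> x; rewrite arrE /= => /orP[ax|/eqP->]; first exact: har.
  rewrite big1 ?hv ?subrr ?mulr0 //; move=> S vS; exact: hun nv S vS.
- by move=> x; rewrite arrE negb_or => /andP[nx _]; apply: hti.
- exact: hcu.
- rewrite -[RHS st']/(RHS st) -hW /W /=; congr (_ + _).
  change (\sum_(x | arrived st' x && ~~ matched st x) (gtime st - atime x) =
          \sum_(x | arrived st x && ~~ matched st x) (gtime st - atime x)).
  rewrite (bigD1 v) /=; last by rewrite arrE eqxx orbT.
  rewrite hv subrr add0r; apply: eq_bigl => x; rewrite arrE.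
  case: (x =P v) => [->|_]; first by rewrite andbF (negbTE nv).
  by rewrite orbF andbT.
Qed.

Lemma has_map_in (gs : seq {set 'I_m}) (t : R) x :
  has (fun g : {set 'I_m} * R => x \in g.1) [seq (g, t) | g <- gs] =
  (x \in \bigcup_(g <- gs) g).
Proof.
elim: gs => [|g gs IH] /=; first by rewrite big_nil finset.inE.
by rewrite big_cons finset.inE IH.
Qed.

Lemma in_gfree (st : gstate R m) S x : x \in gfree st S -> x \in S.
Proof. by rewrite /gfree finset.inE => /andP[]. Qed.

Lemma inv_merge (st : gstate R m) u w (gs : seq {set 'I_m}) : inv st ->
  cross_pair st u w ->
  all (fun g : {set 'I_m} => (g \subset gfree st (blk st u :|: blk st w)) && (#|g| == k)) gs ->
  pairwise (fun g h : {set 'I_m} => [disjoint g & h]) gs ->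
  (#|gfree st (blk st u :|: blk st w) :\: \bigcup_(g <- gs) g| < k)%N ->
  inv (GState (gtime st)
         ((pact st :\ blk st u :\ blk st w) :|: [set blk st u :|: blk st w])
         (gM st ++ [seq (g, gtime st) | g <- gs]) (gy st)).
Proof.
move=> [htr hma hfr hpo hun har hti hcu hW] cp hall hp hlt.
set A := blk st u in hall hlt *; set A2 := blk st w in hall hlt *.
set U := \bigcup_(g <- gs) g in hlt *.
set st' := GState _ _ _ _.
move: cp; rewrite /cross_pair => /and3P[au aw nAA].
have AP : A \in pact st by apply: pblock_mem.
have A2P : A2 \in pact st by apply: pblock_mem.
have dAA : [disjoint A & A2] by apply: (finset.trivIsetP htr).
have hUsub : U \subset gfree st (A :|: A2).
  apply/fintype.subsetP => x; rewrite /U finset.bigcup_seq => /finset.bigcupP [g gin xg].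
  by move/allP: hall => /(_ g gin) /andP[/fintype.subsetP sub _]; apply: sub.
have cardU : #|U| = (k * size gs)%N.
  by apply: card_bigcup_seq => //; apply/allP => g /(allP hall) /andP[_ ->].
have matchE x : matched st' x = matched st x || (x \in U).
  by rewrite /matched /= has_cat has_map_in.
have arrE x : arrived st' x = arrived st x.
  apply/in_cover/in_cover => [[C] | [C CP xC]].
  - rewrite !finset.inE => /orP[/andP[_ /andP[_ CP]] xC | /eqP -> ].
      by exists C.
    by rewrite finset.inE => /orP [xA|xA]; [exists A|exists A2].
  - have [eA|nA] := eqVneq C A.
      by exists (A :|: A2); rewrite !finset.inE ?eqxx ?orbT // -eA xC.
    have [eA2|nA2] := eqVneq C A2.
      by exists (A :|: A2); rewrite !finset.inE ?eqxx ?orbT // -eA2 xC orbT.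
    by exists C; rewrite // !finset.inE nA nA2 CP.
have S0arr x : x \in A :|: A2 -> arrived st x.
  rewrite finset.inE => /orP[xA|xA]; apply/in_cover; [exists A|exists A2] => //.
split.
- apply/finset.trivIsetP => C D; rewrite !finset.inE.
  move=> /orP[/and3P[CA2 CA CP]|/eqP->] /orP[/and3P[DA2 DA DP]|/eqP->] neq.
  + exact: (finset.trivIsetP htr).
  + rewrite disjoint_sym disjointU3.
    by rewrite !(finset.trivIsetP htr) // eq_sym.
  + by rewrite disjointU3 !(finset.trivIsetP htr) // eq_sym.
  + by rewrite eqxx in neq.
- move=> x; rewrite matchE arrE => /orP[/hma //|xU].
  by apply: S0arr; apply: in_gfree; apply: (fintype.subsetP hUsub).
- move=> S; rewrite !finset.inE => /orP[/and3P[SA2 SA SP]|/eqP->].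
    have -> : gfree st' S = gfree st S.
      apply/setP => x; rewrite /gfree !finset.inE matchE.
      case xS: (x \in S) => //=.
      case xU: (x \in U); last by rewrite orbF.
      have := in_gfree _ _ _ ((fintype.subsetP hUsub) x xU); rewrite finset.inE => /orP[xA|xA].
        by rewrite (disjointFr ((finset.trivIsetP htr) _ _ SP AP SA) xS) in xA.
      by rewrite (disjointFr ((finset.trivIsetP htr) _ _ SP A2P SA2) xS) in xA.
    exact: hfr.
  have e1 : gfree st' (A :|: A2) = gfree st (A :|: A2) :\: U.
    by apply/setP => x; rewrite /gfree !finset.inE matchE negb_or; case: (x \in U); rewrite ?andbF ?andbT.
  have e2 : #|gfree st (A :|: A2)| = (sur k A + sur k A2)%N.
    have -> : gfree st (A :|: A2) = gfree st A :|: gfree st A2.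
      by apply/setP => x; rewrite /gfree !finset.inE andb_orl.
    rewrite cardsU (hfr A AP) (hfr A2 A2P).
    have -> : gfree st A :&: gfree st A2 = finset.set0.
      apply/setP => x; rewrite /gfree !finset.inE.
      case xA: (x \in A) => //=; by rewrite (disjointFr dAA xA) ?andbF.
    by rewrite cards0 subn0.
  have e3 : (#|gfree st' (A :|: A2)| + k * size gs)%N = (sur k A + sur k A2)%N.
    by rewrite e1 cardsDS // -e2 -cardU subnK // subset_leq_card.
  rewrite e1 in e3 *.
  rewrite /sur cardsU.
  have -> : A :&: A2 = finset.set0.
    apply/setP => x; rewrite !finset.inE.
    case xA: (x \in A) => //=; by rewrite (disjointFr dAA xA).
  rewrite cards0 subn0 -modnDm -/(sur k A) -/(sur k A2) -e3 addnC mulnC modnMDl modn_small //.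
- exact: hpo.
- by move=> x; rewrite arrE; apply: hun.
- by move=> x; rewrite arrE; apply: har.
- by move=> x; rewrite arrE; apply: hti.
- exact: hcu.
- rewrite -[RHS st']/(RHS st) -hW /W /= big_cat /= big_map.
  rewrite (@big_bigcup_seq _ _ _ _ (fun v => gtime st - atime v) gs hp) -/U.
  rewrite [X in _ = _ + X](bigID (fun x => x \in U)) /= -addrA; congr (_ + _).
  congr (_ + _).
    apply: eq_bigl => x; case xU: (x \in U); rewrite ?andbF //= andbT.
    have xf := (fintype.subsetP hUsub) x xU.
    rewrite S0arr ?(in_gfree _ _ _ xf) //=.
    by move: xf; rewrite /gfree finset.inE => /andP[].
  by apply: eq_bigl => x; rewrite arrE matchE negb_or andbA.
Qed.

Lemma inv_reach st : @gd_reach R X k m gamma r dH atime pos st -> inv st.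
Proof.
elim => [|s s' _ IH hs]; first exact: inv_init.
case: s s' / hs IH => [s0 v h1 h2 | s0 u w gs h1 h2 h3 h4 h5 | s0 t' h1 h2 h3 h4 h5] IH.
- exact: inv_arrive.
- exact: inv_merge.
- exact: inv_wait.
Qed.

Lemma final st : @gd_reach R X k m gamma r dH atime pos st ->
  (forall v, matched st v) ->
  (\sum_(g <- gM st) \sum_(v in g.1) (g.2 - atime v)
     = r^-1 * \sum_(S : {set 'I_m}) ((sur k S)%:R * gy st S)) /\
  ((r^-1 * \sum_(S : {set 'I_m}) ((sur k S)%:R * gy st S))%:E
     <= (r^-1)%:E * @Dprime R X k m gamma dH atime pos)%E.
Proof.
move=> /inv_reach [htr hma hfr hpo hun har hti hcu hW] hall.
split.
  rewrite -/(RHS st) -hW /W [X in _ = _ + X]big1 ?addr0 // => v /andP[_]; by rewrite hall.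
have feas : @Dfeasible R X k m gamma dH atime pos (gy st) by split.
rewrite EFinM; apply: lee_wpmul2l.
  by rewrite lee_fin invr_ge0 ltW // r_gt0.
apply: (@le_trans _ _ (@Dobj R k m (gy st))%:E).
  rewrite lee_fin /Dobj; apply: ler_sum => S _; apply: ler_wpM2r => //.
  rewrite ler_nat.
  have hs : (sur k S < k)%N by rewrite /sur ltn_pmod // (leq_trans _ hk).
  by rewrite -{1}(muln1 (sur k S)) leq_mul2l subn_gt0 hs orbT.
apply: ereal_sup_ubound; by exists (gy st).
Qed.

End Main.

Theorem lemma5 (R : realType) (X : Type) (k m gamma : nat)
  (dH : ('I_k -> X) -> R) (atime : 'I_m -> R) (pos : 'I_m -> X) (r : R)
  (st : gstate R m) :
  (2 <= k)%N -> (1 <= gamma <= k.-1)%N -> @is_Hmetric R X k gamma dH ->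
  (k %| m)%N ->
  (forall v, 0 <= atime v) ->
  (forall u v : 'I_m, (u <= v)%N -> atime u <= atime v) ->
  r = (gamma%:R * k%:R ^+ 2)^-1 ->
  @gd_reach R X k m gamma r dH atime pos st ->
  (forall v, matched st v) ->
  (\sum_(g <- gM st) \sum_(v in g.1) (g.2 - atime v)
     = r^-1 * \sum_(S : {set 'I_m}) ((sur k S)%:R * gy st S)) /\
  ((r^-1 * \sum_(S : {set 'I_m}) ((sur k S)%:R * gy st S))%:E
     <= (r^-1)%:E * @Dprime R X k m gamma dH atime pos)%E.
Proof.
move=> hk /andP[hg _] [_ [hdH _]] _ hat0 _ hr hreach hall.
exact: (@final R X k m gamma r dH atime pos hk hg hdH hr hat0 st hreach hall).
Qed.
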